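(* Let $n\ge 1$, let $K\in\mathbb{R}^{n\times n}$ be symmetric positive semidefinite, let $\Sigma_1,\Sigma_2\in\mathbb{R}^{n\times n}$ be symmetric positive definite, and let $\lambda>1$. Let $K=PLP^T$ be an eigen-decomposition with $P$ orthogonal and $L=\mathrm{diag}(l_1,\dots,l_n)$, $l_1\ge\cdots\ge l_r>l_{r+1}=\cdots=l_n=0$, $r=\mathrm{rank}(K)$. Put $\tilde L=\mathrm{diag}(1/\sqrt{l_1},\dots,1/\sqrt{l_r},1,\dots,1)$, $\tilde K=\tilde L P^T$, $\tilde\Sigma_j=\tilde K\Sigma_j\tilde K^T$ ($j=1,2$), and write in block form (with $r\times r$ upper-left blocks) $$\tilde\Sigma_j=\begin{bmatrix}A_j&B_j\\ B_j^T&C_j\end{bmatrix},\qquad \hat\Sigma_j=A_j-B_jC_j^{-1}B_j^T,\quad j=1,2.$$ Then the optimization problem $$\max_{0\preceq K_U\preceq K}\ \log|K_U+\Sigma_1|-\lambda\log|K_U+\Sigma_2|$$ (over symmetric $n\times n$ matrices $K_U$) is equivalent to the problem $$\max_{0\preceq A_U\preceq I}\ \log|A_U+\hat\Sigma_1|-\lambda\log|A_U+\hat\Sigma_2|$$ (over symmetric $r\times r$ matrices $A_U$, $I$ the $r\times r$ identity), in the sense that $K_U$ is feasible for the first problem if and only if $\tilde K K_U\tilde K^T=\begin{bmatrix}A_U&0\\0&0\end{bmatrix}$ for some $A_U$ feasible for the second problem, and under this correspondence the two objective values differ by an additive constant independent of the variable.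
   Context: $|M|$ denotes the determinant of $M$; $M\preceq N$ means $N-M$ is positive semidefinite. The matrices $\hat\Sigma_1,\hat\Sigma_2$ are positive definite (Schur complements of positive definite matrices); when $r=n$ the blocks $B_j,C_j$ are empty and $\hat\Sigma_j=\tilde\Sigma_j$. *)

(* Defs.v *)
From HB Require Import structures.
From mathcomp Require Import all_boot all_order all_algebra.
From mathcomp Require Import reals exp.
Set Implicit Arguments. Unset Strict Implicit. Unset Printing Implicit Defensive.
Import Order.TTheory GRing.Theory Num.Theory.
Local Open Scope ring_scope.

Section Defs.
Variable R : realType.

Definition psd n (M : 'M[R]_n) : Prop :=
  M^T = M /\ forall x : 'cV[R]_n, 0 <= (x^T *m M *m x) 0 0.

Definition pd n (M : 'M[R]_n) : Prop :=
  M^T = M /\ forall x : 'cV[R]_n, x != 0 -> 0 < (x^T *m M *m x) 0 0.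

Definition loewner_le n (M N : 'M[R]_n) : Prop := psd (N - M).

Definition orthogonal_mx n (P : 'M[R]_n) : Prop := P *m P^T = 1%:M.

Definition objective n (lam : R) (S1 S2 X : 'M[R]_n) : R :=
  ln (\det (X + S1)) - lam * ln (\det (X + S2)).

Definition Ltilde (r s : nat) (l : 'I_(r + s) -> R) : 'M[R]_(r + s) :=
  diag_mx (\row_i (if (i < r)%N then (Num.sqrt (l i))^-1 else 1)).

Definition Ktilde (r s : nat) (l : 'I_(r + s) -> R) (P : 'M[R]_(r + s)) :=
  Ltilde l *m P^T.

Definition Sigma_hat (r s : nat) (Kt Sigma : 'M[R]_(r + s)) : 'M[R]_r :=
  let St := Kt *m Sigma *m Kt^T in
  ulsubmx St - ursubmx St *m invmx (drsubmx St) *m (ursubmx St)^T.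

End Defs.

(* Main.v *)
Require Import Defs.
From HB Require Import structures.
From mathcomp Require Import all_boot all_order all_algebra.
From mathcomp Require Import reals exp.
From mathcomp Require Import ring lra.
Import Order.TTheory GRing.Theory Num.Theory.
Set Implicit Arguments. Unset Strict Implicit. Unset Printing Implicit Defensive.
Local Open Scope ring_scope.

Section Aux.
Variable R : realType.

Lemma congr_tr n (Q M : 'M[R]_n) : M^T = M -> (Q *m M *m Q^T)^T = Q *m M *m Q^T.
Proof. by move=> sM; rewrite !trmx_mul trmxK sM mulmxA. Qed.

Lemma quad_congr n (Q M : 'M[R]_n) (x : 'cV[R]_n) :
  x^T *m (Q *m M *m Q^T) *m x = (Q^T *m x)^T *m M *m (Q^T *m x).
Proof. by rewrite !trmx_mul trmxK !mulmxA. Qed.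

Lemma psd_congr n (Q M : 'M[R]_n) : psd M -> psd (Q *m M *m Q^T).
Proof. by case=> sM qM; split; [exact: congr_tr | move=> x; rewrite quad_congr]. Qed.

Lemma pd_congr n (Q M : 'M[R]_n) : Q \in unitmx -> pd M -> pd (Q *m M *m Q^T).
Proof.
move=> uQ [sM qM]; split; first exact: congr_tr.
move=> x x0; rewrite quad_congr; apply: qM; apply: contra x0 => /eqP H.
have uQT : Q^T \in unitmx by rewrite unitmx_tr.
by apply/eqP; rewrite -[x](mulKmx uQT) H mulmx0.
Qed.

Lemma congrK n (Q X : 'M[R]_n) : Q \in unitmx ->
  invmx Q *m (Q *m X *m Q^T) *m (invmx Q)^T = X.
Proof.
move=> uQ; rewrite trmx_inv !mulmxA mulVmx // mul1mx -mulmxA mulmxV ?unitmx_tr //.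
by rewrite mulmx1.
Qed.

Lemma quad_block m1 m2 (A : 'M[R]_m1) B C (D : 'M[R]_m2) (u : 'cV[R]_m1) (v : 'cV[R]_m2) :
  (col_mx u v)^T *m block_mx A B C D *m col_mx u v =
  u^T *m A *m u + u^T *m B *m v + (v^T *m C *m u + v^T *m D *m v).
Proof.
rewrite tr_col_mx mul_row_block mul_row_col !mulmxDl.
by rewrite -!addrA; congr (_ + _); rewrite addrCA.
Qed.


Lemma sym_block m1 m2 (A : 'M[R]_m1) B C (D : 'M[R]_m2) :
  (block_mx A B C D)^T = block_mx A B C D -> [/\ A^T = A, C = B^T & D^T = D].
Proof. by rewrite tr_block_mx => /eq_block_mx [h1 h2 h3 h4]. Qed.

Lemma col_mx_neq0l m1 m2 (x : 'cV[R]_m1) : x != 0 -> col_mx x (0 : 'cV[R]_m2) != 0.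
Proof. by apply: contra => /eqP; rewrite -col_mx0 => /eq_col_mx [-> _]. Qed.

Lemma col_mx_neq0r m1 m2 (x : 'cV[R]_m2) : x != 0 -> col_mx (0 : 'cV[R]_m1) x != 0.
Proof. by apply: contra => /eqP; rewrite -col_mx0 => /eq_col_mx [_ ->]. Qed.

Lemma pd_blocks m1 m2 (A : 'M[R]_m1) B C (D : 'M[R]_m2) :
  pd (block_mx A B C D) -> pd A /\ pd D.
Proof.
move=> [sM qM]; have [sA _ sD] := sym_block sM; split; split => // x x0.
  have := qM _ (col_mx_neq0l m2 x0).
  by rewrite quad_block !mulmx0 trmx0 !mul0mx !addr0.
have := qM _ (col_mx_neq0r m1 x0).
by rewrite quad_block !mulmx0 trmx0 !mul0mx !add0r.
Qed.

Lemma schur_l m1 m2 (a : 'M[R]_m1) b c (d : 'M[R]_m2) : a \in unitmx ->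
  block_mx a b c d = block_mx 1%:M 0 (c *m invmx a) 1%:M *m
     block_mx a 0 0 (d - c *m invmx a *m b) *m block_mx 1%:M (invmx a *m b) 0 1%:M.
Proof.
move=> ua; rewrite !mulmx_block !mulmx0 !mul0mx !mulmx1 !mul1mx !addr0 !add0r.
rewrite mulmxA mulmxV // mul1mx -!mulmxA mulVmx // mulmx1.
by rewrite mulKmx // addrC subrK.
Qed.

Lemma schur_r m1 m2 (a : 'M[R]_m1) b c (d : 'M[R]_m2) : d \in unitmx ->
  block_mx a b c d = block_mx 1%:M (b *m invmx d) 0 1%:M *m
     block_mx (a - b *m invmx d *m c) 0 0 d *m block_mx 1%:M 0 (invmx d *m c) 1%:M.
Proof.
move=> ud; rewrite !mulmx_block !mulmx0 !mul0mx !mulmx1 !mul1mx !addr0 !add0r.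
rewrite mulmxKV // mulKVmx //.
by rewrite mulmxA subrK.
Qed.


Lemma one_cV1_neq0 : (1%:M : 'cV[R]_1) != 0.
Proof. by apply/eqP => /matrixP /(_ 0 0); rewrite !mxE /= => /eqP; rewrite oner_eq0. Qed.

Lemma pd_det n (M : 'M[R]_n) : pd M -> 0 < \det M.
Proof.
elim: n M => [|n IH] M pdM; first by rewrite det_mx00.
move: M pdM; change n.+1 with (1 + n)%N => M pdM.
rewrite -[M]submxK in pdM *.
move: (ulsubmx M) (ursubmx M) (dlsubmx M) (drsubmx M) pdM => a b c d pdM.
have [sa hc sd] := sym_block pdM.1.
have [pda pdd] := pd_blocks pdM.
have ha := pda.2 _ one_cV1_neq0; rewrite trmx1 mul1mx mulmx1 in ha.
have ua : a \in unitmx by rewrite unitmxE det_mx11 unitfE gt_eqF.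
rewrite (schur_l _ _ _ ua) in pdM *.
set L := block_mx _ _ _ _ in pdM *.
have LT : L^T = block_mx 1%:M (invmx a *m b) 0 1%:M.
  by rewrite /L tr_block_mx !trmx1 !trmx0 trmx_mul trmx_inv sa hc trmxK.
rewrite -LT in pdM *.
have uL : L \in unitmx by rewrite unitmxE /L det_lblock !det1 mulr1 unitr1.
have uL' : invmx L \in unitmx by rewrite unitmx_inv.
have := pd_congr uL' pdM; rewrite congrK // => pdD.
have [_ pdS] := pd_blocks pdD.
rewrite !det_mulmx det_tr /L det_lblock !det1 !mulr1 mul1r det_ublock.
by rewrite mulr_gt0 ?IH // det_mx11.
Qed.


Lemma quad_zero (a b : R) : 0 <= a -> (forall t, 0 <= 2 * t * b + t ^+ 2 * a) -> b = 0.
Proof.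
move=> a0 H; have := H (- b / (a + 1)).
set t := - b / (a + 1).
have a1 : 0 < a + 1 by lra.
have ht : (a + 1) * t = - b by rewrite /t mulrCA divff ?mulr1 // gt_eqF.
move=> h; have h2 : 0 <= (a + 1) ^+ 2 * (2 * t * b + t ^+ 2 * a).
  by rewrite mulr_ge0 // sqr_ge0.
have : (a + 1) ^+ 2 * (2 * t * b + t ^+ 2 * a) = - (b ^+ 2 * (a + 2)).
  have -> : (a + 1) ^+ 2 * (2 * t * b + t ^+ 2 * a) =
     2 * ((a + 1) * t) * b * (a + 1) + ((a + 1) * t) ^+ 2 * a by ring.
  rewrite ht; ring.
move=> e; rewrite e in h2; apply/eqP; rewrite -sqrf_eq0 eq_le sqr_ge0 andbT.
by rewrite oppr_ge0 pmulr_lle0 // in h2; lra.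
Qed.

Lemma psd_null n (M : 'M[R]_n) (y : 'cV[R]_n) : psd M ->
  (y^T *m M *m y) 0 0 = 0 -> M *m y = 0.
Proof.
move=> [sM qM] qy; apply/matrixP => i j; rewrite (ord1 j) [RHS]mxE.
set x : 'cV[R]_n := delta_mx i 0.
have hb : (x^T *m M *m y) 0 0 = (M *m y) i 0.
  by rewrite /x trmx_delta -mulmxA -rowE mxE.
have hs : (y^T *m M *m x) 0 0 = (x^T *m M *m y) 0 0.
  have e : (y^T *m M *m x) 0 0 = ((y^T *m M *m x)^T) 0 0 by rewrite [RHS]mxE.
  by rewrite e !trmx_mul trmxK sM mulmxA.
rewrite -hb; apply: (@quad_zero ((x^T *m M *m x) 0 0)) => // t.
have := qM (y + t *: x).
rewrite [(y + t *: x)^T]linearD /= [(t *: x)^T]linearZ /= !mulmxDl !mulmxDr -!scalemxAl -!scalemxAr.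
move: qy hs; set A1 := y^T *m M *m y; set A2 := y^T *m M *m x;
set A3 := x^T *m M *m y; set A4 := x^T *m M *m x => qy hs.
clearbody A1 A2 A3 A4; rewrite !mxE qy hs; lra.
Qed.



Lemma mx_zero_col m n (B : 'M[R]_(m, n)) : (forall v : 'cV[R]_n, B *m v = 0) -> B = 0.
Proof.
move=> H; apply/matrixP => i j; have := H (delta_mx j 0).
by rewrite -colE => /matrixP /(_ i 0); rewrite !mxE.
Qed.

Lemma psd_block_iff m1 m2 (A : 'M[R]_m1) :
  psd (block_mx A 0 0 (0 : 'M[R]_m2)) <-> psd A.
Proof.
split.
  move=> [sM qM]; have [sA _ _] := sym_block sM; split => // u.
  by have := qM (col_mx u 0); rewrite quad_block !mulmx0 ?trmx0 ?mul0mx !addr0.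
move=> [sA qA]; split; first by rewrite tr_block_mx !trmx0 sA.
move=> x; rewrite -[x]vsubmxK quad_block !mulmx0 !mul0mx !addr0; exact: qA.
Qed.

Lemma feas_char r s (M : 'M[R]_(r + s)) :
  psd M /\ psd (block_mx 1%:M 0 0 0 - M) <->
  exists A : 'M[R]_r, (psd A /\ psd (1%:M - A)) /\ M = block_mx A 0 0 0.
Proof.
split; last first.
  move=> [A [[pA pIA] ->]]; split; first by apply/psd_block_iff.
  by rewrite opp_block_mx add_block_mx !oppr0 !addr0; apply/psd_block_iff.
move=> [pM pEM].
have Mv : forall v : 'cV[R]_s, M *m col_mx 0 v = 0.
  move=> v; apply: psd_null => //; apply/eqP; rewrite eq_le; apply/andP; split; last first.
    by case: pM => _ ->.
  have := pEM.2 (col_mx 0 v).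
  rewrite mulmxBr mulmxBl -mulmxA mul_block_col !mulmx0 !mul0mx !addr0 col_mx0 mulmx0.
  by rewrite sub0r mxE oppr_ge0.
move: pM pEM Mv; rewrite -[M]submxK.
move: (ulsubmx M) (ursubmx M) (dlsubmx M) (drsubmx M) => A B C D pM pEM Mv.
have [sA hC sD] := sym_block pM.1.
have hB : B = 0.
  by apply: mx_zero_col => v; have := Mv v; rewrite mul_block_col !mulmx0 !add0r -col_mx0 => /eq_col_mx [].
have hD : D = 0.
  by apply: mx_zero_col => v; have := Mv v; rewrite mul_block_col !mulmx0 !add0r -col_mx0 => /eq_col_mx [].
rewrite hC hB hD trmx0 in pM pEM *.
exists A; split => //; split.
  exact: (psd_block_iff _ A).1 pM.
move: pEM; rewrite opp_block_mx add_block_mx !oppr0 !addr0 => pEM.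
exact: (psd_block_iff s _).1 pEM.
Qed.


Lemma psd_pd_add n (A B : 'M[R]_n) : psd A -> pd B -> pd (A + B).
Proof.
move=> [sA qA] [sB qB]; split; first by rewrite [(A + B)^T]linearD /= sA sB.
move=> x x0; rewrite mulmxDr mulmxDl mxE.
exact: ltr_wpDl (qA x) (qB x x0).
Qed.

Lemma logdet_shift r s (T S KU : 'M[R]_(r + s)) (AU : 'M[R]_r) :
  T \in unitmx -> pd S -> psd KU -> T *m KU *m T^T = block_mx AU 0 0 0 ->
  ln (\det (KU + S)) = ln (\det (AU + Sigma_hat T S)) +
      ln (\det (drsubmx (T *m S *m T^T)) / \det T ^+ 2).
Proof.
move=> uT pS pK hKU.
have pSt := pd_congr uT pS.
have pKS := psd_pd_add pK pS.
have dpos := pd_det pKS.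
have hT : T *m (KU + S) *m T^T = block_mx AU 0 0 0 + T *m S *m T^T.
  by rewrite mulmxDr mulmxDl hKU.
have hdet : \det (T *m (KU + S) *m T^T) = \det T ^+ 2 * \det (KU + S).
  by rewrite !det_mulmx det_tr expr2 mulrAC.
rewrite /Sigma_hat; move: hT hdet pSt.
set St := T *m S *m T^T => hT hdet pSt.
rewrite -[St]submxK in hT pSt.
rewrite -[St]submxK !block_mxKul !block_mxKur !block_mxKdr.
move: (ulsubmx St) (ursubmx St) (dlsubmx St) (drsubmx St) hT pSt => a b c d hT pSt.
have [_ hc _] := sym_block pSt.1.
have [_ pd_d] := pd_blocks pSt.
have dd := pd_det pd_d.
have ud : d \in unitmx by rewrite unitmxE unitfE gt_eqF.
have hTne : \det T != 0 by rewrite -unitfE -unitmxE.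
have tT : 0 < \det T ^+ 2 by rewrite lt_def sqrf_eq0 hTne sqr_ge0.
rewrite add_block_mx !add0r (schur_r _ _ _ ud) in hT.
rewrite hT !det_mulmx !det_ublock !det_lblock !det1 !mul1r ?mulr1 hc in hdet.
have e1 : \det (KU + S) = \det (AU + (a - b *m invmx d *m b^T)) * (\det d / \det T ^+ 2).
  apply: (mulfI (x:=\det T ^+ 2)); first by rewrite gt_eqF.
  by rewrite -hdet addrA; field.
have ypos : 0 < \det d / \det T ^+ 2 by rewrite divr_gt0.
have xpos : 0 < \det (AU + (a - b *m invmx d *m b^T)).
  by rewrite -(pmulr_lgt0 _ ypos) -e1.
by rewrite e1 lnM.
Qed.

End Aux.

Theorem proposition1 (R : realType) (r s : nat) (K Sigma1 Sigma2 P : 'M[R]_(r + s))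
    (l : 'I_(r + s) -> R) (lam : R) :
  (0 < r + s)%N ->
  psd K -> pd Sigma1 -> pd Sigma2 -> 1 < lam ->
  orthogonal_mx P ->
  K = P *m diag_mx (\row_i l i) *m P^T ->
  (forall i j : 'I_(r + s), (i <= j)%N -> l j <= l i) ->
  (forall i : 'I_(r + s), (i < r)%N -> 0 < l i) ->
  (forall i : 'I_(r + s), (r <= i)%N -> l i = 0) ->
  let Kt := Ktilde l P in
  let S1 := Sigma_hat Kt Sigma1 in
  let S2 := Sigma_hat Kt Sigma2 in
  let feas1 := fun KU : 'M[R]_(r + s) => psd KU /\ loewner_le KU K in
  let feas2 := fun AU : 'M[R]_r => psd AU /\ loewner_le AU 1%:M in
  (forall KU : 'M[R]_(r + s),
     feas1 KU <->
     exists AU : 'M[R]_r, feas2 AU /\ Kt *m KU *m Kt^T = block_mx AU 0 0 0) /\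
  (exists c : R, forall (KU : 'M[R]_(r + s)) (AU : 'M[R]_r),
     feas1 KU -> feas2 AU -> Kt *m KU *m Kt^T = block_mx AU 0 0 0 ->
     objective lam Sigma1 Sigma2 KU = objective lam S1 S2 AU + c).
Proof.
move=> n0 pK pS1 pS2 lam1 oP hK lmono lpos lzero Kt S1 S2 feas1 feas2.
set Lt := Ltilde l.
have PtP : P^T *m P = 1%:M := mulmx1C oP.
have [uP uPT] := mulmx1_unit oP.
have uLt : Lt \in unitmx.
  rewrite unitmxE /Lt /Ltilde det_diag unitfE; apply/prodf_neq0 => i _.
  rewrite mxE; case: ifP => hi; last exact: oner_neq0.
  by rewrite invr_eq0 sqrtr_eq0 -ltNge lpos.
have uKt : Kt \in unitmx by rewrite /Kt /Ktilde unitmx_mul uLt.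
have hE : Kt *m K *m Kt^T = block_mx 1%:M 0 0 0.
  rewrite /Kt /Ktilde -/Lt trmx_mul trmxK /Lt /Ltilde tr_diag_mx hK.
  set Ld := diag_mx _; set D := diag_mx _.
  have -> : Ld *m P^T *m (P *m D *m P^T) *m (P *m Ld) =
            Ld *m (P^T *m P) *m D *m (P^T *m P) *m Ld by rewrite !mulmxA.
  rewrite PtP !mulmx1 /Ld /D !mulmx_diag -pid_mx_block.
  apply/matrixP => i j; rewrite !mxE.
  have e : (i == j :> nat) = (i == j) by []. rewrite e; case: (i == j) => /=; first last. by rewrite mulr0n.
  case: ifP => hi /=.
    have li := lpos i hi; have sq := sqr_sqrtr (ltW li).
    have sne : Num.sqrt (l i) != 0 by rewrite sqrtr_eq0 -ltNge.
    by rewrite mulr1n -{2}sq; field.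
  by rewrite lzero ?mulr0 ?mul0r // leqNgt hi.
split.
  move=> KU.
  have eqE : Kt *m (K - KU) *m Kt^T = block_mx 1%:M 0 0 0 - Kt *m KU *m Kt^T.
    by rewrite mulmxBr mulmxBl hE.
  rewrite /feas1 /feas2 /loewner_le -feas_char; split.
    case=> pKU pKKU; split; first exact: psd_congr.
    by rewrite -eqE; exact: psd_congr.
  case=> pM pEM; split.
    by rewrite -(congrK KU uKt); exact: psd_congr.
  by rewrite -(congrK (K - KU) uKt) eqE; exact: psd_congr.
exists (ln (\det (drsubmx (Kt *m Sigma1 *m Kt^T)) / \det Kt ^+ 2) -
        lam * ln (\det (drsubmx (Kt *m Sigma2 *m Kt^T)) / \det Kt ^+ 2)).
move=> KU AU [pKU _] _ hKU.
rewrite /objective (logdet_shift uKt pS1 pKU hKU) (logdet_shift uKt pS2 pKU hKU) /S1 /S2.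
ring.
Qed.
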